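(* Let $p,q,r$ be pairwise distinct primes with $p<q$ and $p<r$. Let $q',r'\in\{1,\dots,p-1\}$ be the inverses of $q,r$ modulo $p$, let $p'_q\in\{1,\dots,q-1\}$ be the inverse of $p$ modulo $q$ and $p'_r\in\{1,\dots,r-1\}$ the inverse of $p$ modulo $r$. Then for every integer $k$, $$F_k-F_{k-q}=\begin{cases}-1,& \text{if } a_k<r' \text{ and } c_k<p'_r,\\ 1,& \text{if } a_k\ge r' \text{ and } c_k\ge p'_r,\\ 0,&\text{otherwise},\end{cases}$$ and $$F_k-F_{k-r}=\begin{cases}-1,& \text{if } a_k<q' \text{ and } b_k<p'_q,\\ 1,& \text{if } a_k\ge q' \text{ and } b_k\ge p'_q,\\ 0,&\text{otherwise}.\end{cases}$$
   Context: For each integer $k$, let $a_k,b_k,c_k$ be the unique integers with $0\le a_k<p$, $0\le b_k<q$, $0\le c_k<r$ and $k\equiv a_kqr+b_krp+c_kpq \pmod{pqr}$, and define $F_k=\frac{a_k}{p}+\frac{b_k}{q}+\frac{c_k}{r}-\frac{k}{pqr}$. *)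

(* Defs.v *)
From mathcomp Require Import all_boot all_order all_algebra.
Set Implicit Arguments. Unset Strict Implicit. Unset Printing Implicit Defensive.
Import Order.TTheory GRing.Theory Num.Theory.
Local Open Scope ring_scope.

Definition abc_spec (p q r : nat) (k a b c : int) : Prop :=
  [/\ 0 <= a < p%:Z, 0 <= b < q%:Z, 0 <= c < r%:Z &
      (k == a * q%:Z * r%:Z + b * r%:Z * p%:Z + c * p%:Z * q%:Z
         %[mod (p * q * r)%N%:Z])%Z].

Definition Fval (p q r : nat) (a b c : int -> int) (k : int) : rat :=
  (a k)%:~R / p%:R + (b k)%:~R / q%:R + (c k)%:~R / r%:R
  - k%:~R / (p * q * r)%N%:R.

Definition is_inv_mod (x m y : nat) : Prop :=
  [/\ (0 < y)%N, (y < m)%N & (x * y = 1 %[mod m])%N].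

(* Main.v *)
Require Import Defs.
From mathcomp Require Import all_boot all_order all_algebra.
From Stdlib Require Import Ring Field Lia.
Import Order.TTheory GRing.Theory Num.Theory.
Local Open Scope ring_scope.

Definition zadd (x y : int) : int := x + y.
Definition zmul (x y : int) : int := x * y.
Definition zopp (x : int) : int := - x.
Definition z0 : int := 0.
Definition z1 : int := 1.
Lemma int_rt : @ring_theory int z0 z1 zadd zmul (fun x y => zadd x (zopp y)) zopp eq.
Proof. split=> *. exact: add0r. exact: addrC. exact: addrA. exact: mul1r.
 exact: mulrC. exact: mulrA. exact: mulrDl. by []. exact: subrr. Qed.
Add Ring intR : int_rt.
Lemma zaddE (x y : int) : x + y = zadd x y. Proof. by []. Qed.
Lemma zmulE (x y : int) : x * y = zmul x y. Proof. by []. Qed.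
Lemma zoppE (x : int) : - x = zopp x. Proof. by []. Qed.
Ltac zring := rewrite ?zaddE ?zmulE ?zoppE; try change (@GRing.one _) with z1;
  try change (@GRing.zero _) with z0;
  match goal with |- ?a = ?b => change (@eq int a b) end; ring.

Definition qadd (x y : rat) : rat := x + y.
Definition qmul (x y : rat) : rat := x * y.
Definition qopp (x : rat) : rat := - x.
Definition qinv (x : rat) : rat := x^-1.
Definition q0 : rat := 0.
Definition q1 : rat := 1.
Lemma rat_rt : @ring_theory rat q0 q1 qadd qmul (fun x y => qadd x (qopp y)) qopp eq.
Proof. split=> *. exact: add0r. exact: addrC. exact: addrA. exact: mul1r.
 exact: mulrC. exact: mulrA. exact: mulrDl. by []. exact: subrr. Qed.
Lemma rat_ft : @field_theory rat q0 q1 qadd qmul (fun x y => qadd x (qopp y)) qopp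
  (fun x y => qmul x (qinv y)) qinv eq.
Proof. split. exact rat_rt. by move/eqP; rewrite /q1 /q0 oner_eq0. by [].
 move=> x H; rewrite /qmul /qinv /q1 mulrC mulfV //; apply/eqP; exact: H. Qed.
Add Field ratF : rat_ft.
Lemma qaddE (x y : rat) : x + y = qadd x y. Proof. by []. Qed.
Lemma qmulE (x y : rat) : x * y = qmul x y. Proof. by []. Qed.
Lemma qoppE (x : rat) : - x = qopp x. Proof. by []. Qed.
Lemma qinvE (x : rat) : x^-1 = qinv x. Proof. by []. Qed.
Definition qnat (n : nat) : rat := n%:R.
Definition qint (z : int) : rat := z%:~R.
Lemma qnatE (n : nat) : n%:R = qnat n :> rat. Proof. by []. Qed.
Lemma qintE (z : int) : z%:~R = qint z :> rat. Proof. by []. Qed.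
Ltac qprep := rewrite ?qnatE ?qintE ?qaddE ?qmulE ?qoppE ?qinvE; try change (@GRing.one _) with q1;
  try change (@GRing.zero _) with q0;
  match goal with |- ?a = ?b => change (@eq rat a b) end.

Ltac natlia := repeat match goal with
  | H : is_true (_ <= _)%N |- _ => move/ssrnat.leP: H => H end;
  try apply/ssrnat.leP; try (rewrite <- minusE in * ); try (rewrite <- plusE in * );
  try (rewrite <- multE in * ); lia.

Lemma nat_of_range (x : int) (n : nat) : 0 <= x < n%:Z -> exists2 m : nat, x = m%:Z & (m < n)%N.
Proof. case: x => m /andP[h0 h] //; by exists m. Qed.

Lemma cong_unique (p x y : nat) (X : int) : coprimez p%:Z X -> (x < p)%N -> (y < p)%N ->
  (p%:Z %| (x%:Z - y%:Z) * X)%Z -> x = y.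
Proof.
move=> cX hx hy; rewrite Gauss_dvdzl // -eqz_mod_dvd !modz_nat => /eqP [e].
by rewrite -(modn_small hx) -(modn_small hy).
Qed.

Lemma mod1E (x m : nat) : (0 < x)%N -> (x = 1 %[mod m])%N -> exists t, x = (t * m + 1)%N.
Proof.
move=> x0 h; have : (m %| x - 1)%N by rewrite -eqn_mod_dvd // h.
by case/dvdnP => t ht; exists t; rewrite -ht subnK.
Qed.

Lemma natid (p r r' s d : nat) : (0 < r')%N -> (0 < s)%N -> (r' < p)%N -> (s < r)%N ->
  (r' * r + s * p = d * (p * r) + 1)%N -> (r' * r + s * p = p * r + 1)%N.
Proof.
move=> h1 h2 h3 h4 e.
have r0 : (0 < r)%N by apply: leq_ltn_trans h4.
have p0 : (0 < p)%N by apply: leq_ltn_trans h3.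
have h5 : (r' * r < p * r)%N by rewrite ltn_pmul2r.
have h6 : (s * p < p * r)%N by rewrite mulnC ltn_pmul2l.
have h7 : (0 < r' * r)%N by rewrite muln_gt0 h1.
have h8 : (0 < s * p)%N by rewrite muln_gt0 h2.
move: e h5 h6 h7 h8. rewrite -!multE -!plusE. set X := Nat.mul p r.
move=> e /ssrnat.ltP h5 /ssrnat.ltP h6 /ssrnat.ltP h7 /ssrnat.ltP h8. destruct d as [|[|d]]; simpl in e; lia.
Qed.

Lemma natc (n : nat) : (n%:Z)%:~R = n%:R :> rat.
Proof. by rewrite -pmulrn. Qed.
Arguments nat_of_range [x n].
Arguments mod1E [x m].
Lemma sel_lt (al r' p : nat) : (al < p)%N -> (r' < p)%N ->
  ((if (r' <= al)%N then (al - r')%N else (al + p - r')%N) < p)%N.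
Proof. by move=> h1 h2; case: (leqP r' al) => h /=; natlia. Qed.

Lemma part1 (p q r : nat) (a b c : int -> int) (r' p'r : nat)
  (hp : prime p) (hq : prime q) (hr : prime r)
  (hpq : (p < q)%N) (hpr : (p < r)%N) (hqr : q != r)
  (habc : forall k : int, abc_spec p q r k (a k) (b k) (c k))
  (hr' : is_inv_mod r p r') (hp'r : is_inv_mod p r p'r) (k : int) :
    Fval p q r a b c k - Fval p q r a b c (k - q%:Z) =
      (if (a k < r'%:Z) && (c k < p'r%:Z) then -1
       else if (r'%:Z <= a k) && (p'r%:Z <= c k) then 1 else 0).
Proof.
have p0 := prime_gt0 hp; have q0 := prime_gt0 hq; have r0 := prime_gt0 hr.
have cpq : coprime p q by rewrite prime_coprime // dvdn_prime2 // neq_ltn hpq.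
have cpr : coprime p r by rewrite prime_coprime // dvdn_prime2 // neq_ltn hpr.
have cqr : coprime q r by rewrite prime_coprime // dvdn_prime2.
have cP : coprimez p%:Z (q%:Z * r%:Z) by rewrite coprimezE abszM /= coprimeMr cpq cpr.
have cQ : coprimez q%:Z (r%:Z * p%:Z).
  by rewrite coprimezE abszM /= coprimeMr cqr coprime_sym cpq.
have cR : coprimez r%:Z (p%:Z * q%:Z).
  by rewrite coprimezE abszM /= coprimeMr coprime_sym cpr coprime_sym cqr.
case: hr' => r'0 r'p hrr'; case: hp'r => s0 sr hps.
have rr0 : (0 < r * r')%N by rewrite muln_gt0 r0 r'0.
have [t ht] := mod1E rr0 hrr'.
have hZt : r%:Z * r'%:Z = t%:Z * p%:Z + 1 by rewrite -PoszM ht.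
have pp0 : (0 < p * p'r)%N by rewrite muln_gt0 p0 s0.
have [u hu] := mod1E pp0 hps.
have hZu : p%:Z * p'r%:Z = u%:Z * r%:Z + 1 by rewrite -PoszM hu.
case: (habc k) => ha hb hc hk.
case: (habc (k - q%:Z)) => ha1 hb1 hc1 hk1.
have [al hal alp] := nat_of_range ha; have [be hbe bep] := nat_of_range hb.
have [ga hga gap] := nat_of_range hc.
have [al1 hal1 al1p] := nat_of_range ha1; have [be1 hbe1 be1p] := nat_of_range hb1.
have [ga1 hga1 ga1p] := nat_of_range hc1.
rewrite eqz_mod_dvd in hk; rewrite eqz_mod_dvd in hk1.
case/dvdzP: hk => m1 hm1; case/dvdzP: hk1 => m2 hm2.
rewrite hal hbe hga !PoszM in hm1; rewrite hal1 hbe1 hga1 !PoszM in hm2.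
set S := (_ * _ * _ + _ + _) in hm1.
set S1 := (_ * _ * _ + _ + _) in hm2.
pose a' := if (r' <= al)%N then (al - r')%N else (al + p - r')%N.
have ea' : a'%:Z = al%:Z - r'%:Z + (if (r' <= al)%N then 0 else 1) * p%:Z.
  rewrite /a'; case: leqP => h; rewrite ?mul0r ?addr0 ?mul1r.
    by rewrite subzn.
  rewrite -subzn; last by rewrite (leq_trans (ltnW r'p)) // leq_addl.
  by rewrite PoszD; zring.
have ha' : al1 = a'.
  apply: (@cong_unique p al1 a' (q%:Z * r%:Z) cP al1p).
    exact: sel_lt.
  have -> : (al1%:Z - a'%:Z) * (q%:Z * r%:Z) = (k - S) - ((k - q%:Z) - S1)
     + q%:Z * (r%:Z * r'%:Z - 1) + p%:Z * (be%:Z * r%:Z + ga%:Z * q%:Z - be1%:Z * r%:Z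
     - ga1%:Z * q%:Z - (if (r' <= al)%N then 0 else 1) * (q%:Z * r%:Z)).
    by rewrite ea' /S /S1; zring.
  rewrite hm1 hm2 hZt.
  apply/dvdzP; exists (m1 * (q%:Z * r%:Z) - m2 * (q%:Z * r%:Z) + q%:Z * t%:Z
    + be%:Z * r%:Z + ga%:Z * q%:Z - be1%:Z * r%:Z - ga1%:Z * q%:Z
    - (if (r' <= al)%N then 0 else 1) * (q%:Z * r%:Z)); zring.
pose c' := if (p'r <= ga)%N then (ga - p'r)%N else (ga + r - p'r)%N.
have ec' : c'%:Z = ga%:Z - p'r%:Z + (if (p'r <= ga)%N then 0 else 1) * r%:Z.
  rewrite /c'; case: (leqP p'r ga) => h; rewrite ?mul0r ?addr0 ?mul1r.
    by rewrite subzn.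
  rewrite -subzn; last by rewrite (leq_trans (ltnW sr)) // leq_addl.
  by rewrite PoszD; zring.
have hc' : ga1 = c'.
  apply: (@cong_unique r ga1 c' (p%:Z * q%:Z) cR ga1p); first exact: sel_lt.
  have -> : (ga1%:Z - c'%:Z) * (p%:Z * q%:Z) = (k - S) - ((k - q%:Z) - S1)
     + q%:Z * (p%:Z * p'r%:Z - 1) + r%:Z * (al%:Z * q%:Z + be%:Z * p%:Z - al1%:Z * q%:Z
     - be1%:Z * p%:Z - (if (p'r <= ga)%N then 0 else 1) * (p%:Z * q%:Z)).
    by rewrite ec' /S /S1; zring.
  rewrite hm1 hm2 hZu.
  apply/dvdzP; exists (m1 * (p%:Z * q%:Z) - m2 * (p%:Z * q%:Z) + q%:Z * u%:Z
    + al%:Z * q%:Z + be%:Z * p%:Z - al1%:Z * q%:Z - be1%:Z * p%:Z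
    - (if (p'r <= ga)%N then 0 else 1) * (p%:Z * q%:Z)); zring.
have hb' : be1 = be.
  apply: (@cong_unique q be1 be (r%:Z * p%:Z) cQ be1p bep).
  have -> : (be1%:Z - be%:Z) * (r%:Z * p%:Z) = (k - S) - ((k - q%:Z) - S1) - q%:Z
     + q%:Z * (al%:Z * r%:Z - al1%:Z * r%:Z + ga%:Z * p%:Z - ga1%:Z * p%:Z).
    by rewrite /S /S1; zring.
  rewrite hm1 hm2.
  apply/dvdzP; exists (m1 * (r%:Z * p%:Z) - m2 * (r%:Z * p%:Z) - 1
    + al%:Z * r%:Z - al1%:Z * r%:Z + ga%:Z * p%:Z - ga1%:Z * p%:Z); zring.
have hN : (r' * r + p'r * p = p * r + 1)%N.
  have d1 : (p %| r' * r + p'r * p - 1)%N.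
    by rewrite [(r' * r)%N]mulnC ht addnAC addnK dvdn_add ?dvdn_mull.
  have d2 : (r %| r' * r + p'r * p - 1)%N.
    by rewrite [(p'r * p)%N]mulnC hu addnA addnK dvdn_add ?dvdn_mull.
  have : (p * r %| r' * r + p'r * p - 1)%N by rewrite Gauss_dvd // d1 d2.
  case/dvdnP => d hd; apply: (@natid p r r' p'r d) => //.
  by rewrite -hd subnK // addn_gt0 muln_gt0 r'0 r0.
have hNq : (r'%:R * r%:R + p'r%:R * p%:R = p%:R * r%:R + 1 :> rat).
  by rewrite -!natrM -natrD hN natrD natrM.
rewrite /Fval hal hbe hga hal1 hbe1 hga1 ha' hb' hc' ea' ec' !ltz_nat !lez_nat.
rewrite ?intrD ?intrB ?intrN ?intrM ?natc ?natrM.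
have pq0 : (p%:R : rat) != 0 by rewrite pnatr_eq0 -lt0n.
have qq0 : (q%:R : rat) != 0 by rewrite pnatr_eq0 -lt0n.
have rq0 : (r%:R : rat) != 0 by rewrite pnatr_eq0 -lt0n.
have hR' : (r'%:R : rat) = (p%:R * r%:R + 1 - p'r%:R * p%:R) / r%:R.
  rewrite -hNq; move: rq0; rewrite qaddE qmulE qoppE qinvE => /eqP rq0'.
  qprep; field; exact: rq0'.
case: (leqP r' al) => h1; case: (leqP p'r ga) => h2 /=;
  rewrite ?mulr0z ?mulr1z hR'; move: pq0 qq0 rq0 => /eqP pq0 /eqP qq0 /eqP rq0;
  qprep; field; repeat split; assumption.
Qed.

Lemma swap_abc p q r k (a b c : int) : abc_spec p q r k a b c -> abc_spec p r q k a c b.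
Proof.
case=> ha hb hc hk; split => //; rewrite [(p * r * q)%N]mulnAC.
have -> : a * r%:Z * q%:Z + c * q%:Z * p%:Z + b * p%:Z * r%:Z
  = a * q%:Z * r%:Z + b * r%:Z * p%:Z + c * p%:Z * q%:Z by zring.
exact: hk.
Qed.

Lemma Fswap p q r (a b c : int -> int) k : Fval p r q a c b k = Fval p q r a b c k.
Proof. rewrite /Fval [(p * r * q)%N]mulnAC; qprep; ring. Qed.

Theorem lemma2 (p q r : nat) (a b c : int -> int) (q' r' p'q p'r : nat)
  (hp : prime p) (hq : prime q) (hr : prime r)
  (hpq : (p < q)%N) (hpr : (p < r)%N) (hqr : q != r)
  (habc : forall k : int, abc_spec p q r k (a k) (b k) (c k))
  (hq' : is_inv_mod q p q') (hr' : is_inv_mod r p r')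
  (hp'q : is_inv_mod p q p'q) (hp'r : is_inv_mod p r p'r) :
  forall k : int,
    Fval p q r a b c k - Fval p q r a b c (k - q%:Z) =
      (if (a k < r'%:Z) && (c k < p'r%:Z) then -1
       else if (r'%:Z <= a k) && (p'r%:Z <= c k) then 1 else 0)
    /\
    Fval p q r a b c k - Fval p q r a b c (k - r%:Z) =
      (if (a k < q'%:Z) && (b k < p'q%:Z) then -1
       else if (q'%:Z <= a k) && (p'q%:Z <= b k) then 1 else 0).
Proof.
move=> k; split; first exact: part1.
have habc' : forall k : int, abc_spec p r q k (a k) (c k) (b k).
  by move=> k'; apply: swap_abc.
have hrq : r != q by rewrite eq_sym.
have := @part1 p r q a c b q' p'q hp hr hq hpr hpq hrq habc' hq' hp'q k.
by rewrite !(Fswap p q r).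
Qed.
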